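(* For every base $\mathcal{B}$, atomic multisets $L$ and $K$, and atom $p$: $L\Vdash^K_{\mathcal{B}}p$ if and only if $L,K\vdash_{\mathcal{B}}p$.
   Context: Fix a set $\mathbb{A}$ of propositional atoms. ILL formulae: $\phi ::= p\in\mathbb{A} \mid \top \mid 0 \mid 1 \mid \phi\multimap\phi \mid \phi\otimes\phi \mid \phi\,\&\,\phi \mid \phi\oplus\phi \mid\ !\phi$. All multisets are finite; ''$\Gamma,\Delta$'' denotes multiset union. Atomic rules and bases: an atomic sequent is $P\Rightarrow p$ with $P$ a multiset of atoms, $p$ an atom. An atomic box is a multiset of atomic sequents. An atomic rule is a triple $\langle\mathbf{A},\mathbf{S},p\rangle$ with $\mathbf{A}$ a multiset of atomic boxes, $\mathbf{S}$ an atomic box, $p$ an atom. A base is a set of atomic rules. An atom $p$ is persistent in $\mathcal{B}$ if some $\langle\varnothing,\mathbf{S},p\rangle\in\mathcal{B}$ has $\mathbf{S}\neq\varnothing$. Derivability $\vdash_{\mathcal{B}}$: (Ref) $p\vdash_{\mathcal{B}}p$; (App) if $\langle\mathbf{A},\mathbf{S},p\rangle\in\mathcal{B}$ with $\mathbf{A}=\{\mathbf{T}_1,\dots,\mathbf{T}_m\}$, and there are atomic multisets $C_1,\dots,C_n$ ($n\ge m$) and a multiset $D=\{d_{m+1},\dots,d_n\}$ of atoms persistent in $\mathcal{B}$ such that $C_i,Q\vdash_{\mathcal{B}}q$ for every $i\le m$ and every $Q\Rightarrow q\in\mathbf{T}_i$, $C_j\vdash_{\mathcal{B}}d_j$ for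 every $m<j\le n$, and $D,U\vdash_{\mathcal{B}}v$ for every $U\Rightarrow v\in\mathbf{S}$, then $C_1,\dots,C_n\vdash_{\mathcal{B}}p$. Support $\Vdash^L_{\mathcal{B}}$ (base $\mathcal{B}$, atomic multiset $L$), by induction on formulae: $\Vdash^L_{\mathcal{B}}p$ iff $L\vdash_{\mathcal{B}}p$; $\Vdash^L_{\mathcal{B}}\varphi\multimap\psi$ iff $\varphi\Vdash^L_{\mathcal{B}}\psi$; $\Vdash^L_{\mathcal{B}}\varphi\otimes\psi$ iff for all $\mathcal{C}\supseteq\mathcal{B}$, atomic $K$, atoms $p$: if $\varphi,\psi\Vdash^K_{\mathcal{C}}p$ then $\Vdash^{L,K}_{\mathcal{C}}p$; $\Vdash^L_{\mathcal{B}}1$ iff for all $\mathcal{C}\supseteq\mathcal{B}$, $K$, $p$: if $\Vdash^K_{\mathcal{C}}p$ then $\Vdash^{L,K}_{\mathcal{C}}p$; $\Vdash^L_{\mathcal{B}}\varphi\&\psi$ iff $\Vdash^L_{\mathcal{B}}\varphi$ and $\Vdash^L_{\mathcal{B}}\psi$; $\Vdash^L_{\mathcal{B}}\varphi\oplus\psi$ iff for all $\mathcal{C}\supseteq\mathcal{B}$, $K$, $p$: if $\varphi\Vdash^K_{\mathcal{C}}p$ and $\psi\Vdash^K_{\mathcal{C}}p$ then $\Vdash^{L,K}_{\mathcal{C}}p$; $\Vdash^L_{\mathcal{B}}0$ iff $\Vdash^{L,K}_{\mathcal{B}}p$ for all atoms $p$ and atomic $K$; $\Vdash^L_{\mathcal{B}}\top$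 always; $\Vdash^L_{\mathcal{B}}!\varphi$ iff for all $\mathcal{C}\supseteq\mathcal{B}$, $K$, $p$: if (for all $\mathcal{D}\supseteq\mathcal{C}$, $\Vdash^{\varnothing}_{\mathcal{D}}\varphi$ implies $\Vdash^K_{\mathcal{D}}p$) then $\Vdash^{L,K}_{\mathcal{C}}p$. For nonempty multisets: $\Vdash^L_{\mathcal{B}}\Gamma,\Delta$ iff $L=K,M$ with $\Vdash^K_{\mathcal{B}}\Gamma$ and $\Vdash^M_{\mathcal{B}}\Delta$. For a nonempty antecedent written $!\Delta,\Theta$, where $!\Delta$ collects the formulae with top-level connective $!$ (with $\Delta$ the formulae under those $!$) and $\Theta$ contains none: $!\Delta,\Theta\Vdash^L_{\mathcal{B}}\varphi$ iff for all $\mathcal{C}\supseteq\mathcal{B}$ and atomic $K$, if $\Vdash^{\varnothing}_{\mathcal{C}}\delta$ for every $\delta\in\Delta$ and $\Vdash^K_{\mathcal{C}}\Theta$ then $\Vdash^{L,K}_{\mathcal{C}}\varphi$ (when $\Theta$ is empty, $K$ is empty). An empty antecedent: $\varnothing\Vdash^L_{\mathcal{B}}\varphi$ means $\Vdash^L_{\mathcal{B}}\varphi$. An atomic multiset $L$ used as an antecedent is regarded as a multiset of atomic formulae. *)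

(* Defs.v *)
From Stdlib Require Import List Permutation.
Import ListNotations.
Set Implicit Arguments.

Section BeS.
Variable A : Type.

(* Finite multisets are represented by lists, considered up to Permutation;
   multiset union is list concatenation. *)
Definition atomic_seq := (list A * A)%type.
Definition box := list atomic_seq.
Definition rule := (list box * box * A)%type.
Definition base := rule -> Prop.

Definition ext (B C : base) : Prop := forall r, B r -> C r.

Definition persistent (B : base) (p : A) : Prop :=
  exists S : box, S <> [] /\ B ([], S, p).

(* In (App), the
   list [Cs] holds C_1..C_m (paired with T_1..T_m), and [Es] holds the pairs
   (C_j, d_j) for m < j <= n; D is the multiset of the d_j. *)
Inductive deriv (B : base) : list A -> A -> Prop :=
| d_ref : forall L p, Permutation L [p] -> deriv B L p
| d_app : forall (As : list box) (S : box) (p : A)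
            (Cs : list (list A)) (Es : list (list A * A)) (L : list A),
    B (As, S, p) ->
    Forall2 (fun (T : box) (C : list A) =>
               forall Q q, In (Q, q) T -> deriv B (C ++ Q) q) As Cs ->
    (forall C d, In (C, d) Es -> persistent B d /\ deriv B C d) ->
    (forall U v, In (U, v) S -> deriv B (map snd Es ++ U) v) ->
    Permutation L (concat Cs ++ concat (map fst Es)) ->
    deriv B L p.

Inductive formula : Type :=
| FAtom : A -> formula
| FTop : formula
| FZero : formula
| FOne : formula
| FImp : formula -> formula -> formula
| FTensor : formula -> formula -> formula
| FWith : formula -> formula -> formula
| FPlus : formula -> formula -> formula
| FBang : formula -> formula.

(* An antecedent item: either a !δ (represented by the predicate
   C |-> ⊩^∅_C δ) or a non-! formula θ (represented by (C,K) |-> ⊩^K_C θ). *)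
Definition item := ((base -> Prop) + (base -> list A -> Prop))%type.

(* ⊩^K_C Θ for a multiset Θ of non-! formulas; empty Θ forces K empty. *)
Fixpoint msupp (C : base) (K : list A) (Th : list (base -> list A -> Prop))
  : Prop :=
  match Th with
  | [] => K = []
  | [s] => s C K
  | s :: Th' => exists K1 K2, Permutation K (K1 ++ K2) /\ s C K1 /\ msupp C K2 Th'
  end.

Definition bangs (G : list item) : list (base -> Prop) :=
  flat_map (fun i => match i with inl b => [b] | inr _ => [] end) G.
Definition nonbangs (G : list item) : list (base -> list A -> Prop) :=
  flat_map (fun i => match i with inl _ => [] | inr s => [s] end) G.

(* !Δ,Θ ⊩^L_B goal  for a nonempty antecedent. *)
Definition ante (B : base) (L : list A) (G : list item)
  (goal : base -> list A -> Prop) : Prop :=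
  forall C, ext B C -> forall K,
    (forall b, In b (bangs G) -> b C) ->
    msupp C K (nonbangs G) ->
    goal C (L ++ K).

Fixpoint supp (phi : formula) (B : base) (L : list A) {struct phi} : Prop :=
  match phi with
  | FAtom p => deriv B L p
  | FTop => True
  | FZero => forall p K, deriv B (L ++ K) p
  | FOne => forall C, ext B C -> forall K p, deriv C K p -> deriv C (L ++ K) p
  | FImp f g =>
      ante B L
        [match f with FBang h => inl (fun C => supp h C []) | _ => inr (supp f) end]
        (supp g)
  | FTensor f g =>
      forall C, ext B C -> forall K p,
        ante C K
          [match f with FBang h => inl (fun C => supp h C []) | _ => inr (supp f) end;
           match g with FBang h => inl (fun C => supp h C []) | _ => inr (supp g) end]
          (fun D M => deriv D M p) ->
        deriv C (L ++ K) p
  | FWith f g => supp f B L /\ supp g B L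
  | FPlus f g =>
      forall C, ext B C -> forall K p,
        ante C K
          [match f with FBang h => inl (fun C => supp h C []) | _ => inr (supp f) end]
          (fun D M => deriv D M p) ->
        ante C K
          [match g with FBang h => inl (fun C => supp h C []) | _ => inr (supp g) end]
          (fun D M => deriv D M p) ->
        deriv C (L ++ K) p
  | FBang f =>
      forall C, ext B C -> forall K p,
        (forall D, ext C D -> supp f D [] -> deriv D K p) ->
        deriv C (L ++ K) p
  end.

Definition item_of (phi : formula) : item :=
  match phi with FBang h => inl (fun C => supp h C []) | _ => inr (supp phi) end.

Definition ssupp (G : list formula) (B : base) (L : list A) (phi : formula) : Prop :=
  match G with
  | [] => supp phi B L
  | _ => ante B L (map item_of G) (supp phi)
  end.

End BeS.

(* Main.v *)
Require Import Defs.
From Stdlib Require Import List Permutation.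
Import ListNotations.

Section Ind.
Variable A : Type.
Variable B : base A.
Variable P : list A -> A -> Prop.
Hypothesis Href : forall L p, Permutation L [p] -> P L p.
Hypothesis Happ : forall (As : list (box A)) (S : box A) (p : A)
            (Cs : list (list A)) (Es : list (list A * A)) (L : list A),
    B (As, S, p) ->
    Forall2 (fun (T : box A) (C : list A) =>
               forall Q q, In (Q, q) T -> deriv B (C ++ Q) q /\ P (C ++ Q) q) As Cs ->
    (forall C d, In (C, d) Es -> persistent B d /\ deriv B C d /\ P C d) ->
    (forall U v, In (U, v) S -> deriv B (map snd Es ++ U) v /\ P (map snd Es ++ U) v) ->
    Permutation L (concat Cs ++ concat (map fst Es)) ->
    P L p.

Fixpoint deriv_ind2 L p (H : deriv B L p) {struct H} : P L p :=
  match H with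
  | @d_ref _ _ _ _ Hp => Href _ _ Hp
  | @d_app _ _ _ _ _ _ _ _ HB HF HE HS Hperm =>
     Happ _ _ _ _ _ _ HB
       ((fix f As Cs (F : Forall2 (fun (T : box A) (C : list A) =>
               forall Q q, In (Q, q) T -> deriv B (C ++ Q) q) As Cs) :
            Forall2 (fun (T : box A) (C : list A) =>
               forall Q q, In (Q, q) T -> deriv B (C ++ Q) q /\ P (C ++ Q) q) As Cs :=
          match F with
          | Forall2_nil _ => Forall2_nil _
          | Forall2_cons T C h F' =>
              Forall2_cons T C (fun Q q i => conj (h Q q i) (deriv_ind2 _ _ (h Q q i))) (f _ _ F')
          end) _ _ HF)
       (fun C d i => match HE C d i with conj a b => conj a (conj b (deriv_ind2 _ _ b)) end)
       (fun U v i => conj (HS U v i) (deriv_ind2 _ _ (HS U v i)))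
       Hperm
  end.
End Ind.

Section L.
Variable A : Type.

Lemma deriv_perm (B : base A) L L' p : deriv B L p -> Permutation L L' -> deriv B L' p.
Proof.
  intros H HP; destruct H.
  - apply d_ref. eapply perm_trans; [apply Permutation_sym, HP| exact H].
  - eapply d_app; eauto. eapply perm_trans; [apply Permutation_sym, HP| eassumption].
Qed.

Lemma deriv_mono (B C : base A) L p : ext B C -> deriv B L p -> deriv C L p.
Proof.
  intros HBC H. revert L p H.
  apply (@deriv_ind2 A B (fun L p => deriv C L p)).
  - intros; now apply d_ref.
  - intros As S p Cs Es L HB HF HE HS HP.
    apply d_app with As S Cs Es; auto.
    + eapply Forall2_impl; [|exact HF]. intros T C' h Q q i. apply (h Q q i).
    + intros C' d i. destruct (HE C' d i) as [[S' [h1 h2]] [_ h3]].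
      split; auto. exists S'; auto.
    + intros U v i. apply (HS U v i).
Qed.

Lemma perm_helper (a : A) M N X C1 C2 Y :
  Permutation (a :: M) (X ++ C1 ++ a :: C2 ++ Y) ->
  Permutation (N ++ M) (X ++ N ++ C1 ++ C2 ++ Y).
Proof.
  intros H.
  assert (H2 : Permutation M (X ++ C1 ++ C2 ++ Y)).
  { apply Permutation_cons_inv with a. eapply perm_trans; [exact H|].
    rewrite !app_assoc. apply Permutation_sym.
    rewrite <- (app_assoc (X ++ C1)). apply Permutation_middle. }
  eapply perm_trans; [apply Permutation_app_head, H2|].
  apply Permutation_app_swap_app.
Qed.

Lemma deriv_cut (B : base A) L p : deriv B L p ->
  forall a M N, Permutation L (a :: M) -> deriv B N a -> deriv B (N ++ M) p.
Proof.
  revert L p.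
  apply (@deriv_ind2 A B (fun L p => forall a M N, Permutation L (a :: M) -> deriv B N a -> deriv B (N ++ M) p)).
  - intros L p HP a M N HP2 HN.
    assert (E : a :: M = [p]).
    { apply Permutation_length_1_inv. eapply perm_trans; [apply Permutation_sym, HP| exact HP2]. }
    inversion E; subst. now rewrite app_nil_r.
  - intros As S p Cs Es L HB HF HE HS HP a M N HP2 HN.
    assert (Ha : In a (concat Cs ++ concat (map fst Es))).
    { eapply Permutation_in; [exact HP| ]. eapply Permutation_in; [apply Permutation_sym, HP2|]. now left. }
    apply in_app_or in Ha. destruct Ha as [Ha|Ha].
    + apply in_concat in Ha. destruct Ha as [C [HC Ha]].
      apply in_split in HC. destruct HC as [Cs1 [Cs2 ->]].
      apply in_split in Ha. destruct Ha as [C1 [C2 ->]].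
      apply Forall2_app_inv_r in HF. destruct HF as [As1 [As2 [HF1 [HF2 ->]]]].
      inversion HF2 as [|T C' As2' Cs2' hT HF2']; subst.
      apply d_app with (As1 ++ T :: As2') S (Cs1 ++ (N ++ C1 ++ C2) :: Cs2) Es; auto.
      * apply Forall2_app.
        { eapply Forall2_impl; [|exact HF1]. intros T' C' h Q q i. apply (h Q q i). }
        constructor.
        { intros Q q i. destruct (hT Q q i) as [_ IH].
          rewrite <- !app_assoc. apply IH with a; auto.
          rewrite <- app_assoc. simpl. apply Permutation_sym, Permutation_middle. }
        eapply Forall2_impl; [|exact HF2']. intros T' C' h Q q i. apply (h Q q i).
      * intros C' d i. destruct (HE C' d i) as [h1 [h2 _]]; auto.
      * intros U v i. apply (HS U v i).
      * rewrite concat_app. simpl. rewrite <- !app_assoc.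
        apply perm_helper with a.
        eapply perm_trans; [apply Permutation_sym, HP2|].
        eapply perm_trans; [exact HP|].
        rewrite concat_app. simpl. rewrite <- !app_assoc. apply Permutation_refl.
    + apply in_concat in Ha. destruct Ha as [C [HC Ha]].
      apply in_map_iff in HC. destruct HC as [[C0 d0] [HC0 HC]]. simpl in HC0. subst C0.
      apply in_split in HC. destruct HC as [Es1 [Es2 ->]].
      apply in_split in Ha. destruct Ha as [C1 [C2 ->]].
      assert (Hsnd : map snd (Es1 ++ (N ++ C1 ++ C2, d0) :: Es2) = map snd (Es1 ++ (C1 ++ a :: C2, d0) :: Es2)).
      { rewrite !map_app. reflexivity. }
      apply d_app with As S Cs (Es1 ++ (N ++ C1 ++ C2, d0) :: Es2); auto.
      * eapply Forall2_impl; [|exact HF]. intros T' C' h Q q i. apply (h Q q i).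
      * intros C' d i. apply in_app_or in i. destruct i as [i|[i|i]].
        { destruct (HE C' d (in_or_app _ _ _ (or_introl i))) as [h1 [h2 _]]; auto. }
        { inversion i; subst.
          destruct (HE (C1 ++ a :: C2) d (in_or_app _ _ _ (or_intror (in_eq _ _)))) as [h1 [_ IH]].
          split; auto. apply IH with a; auto.
          apply Permutation_sym, Permutation_middle. }
        { destruct (HE C' d (in_or_app _ _ _ (or_intror (in_cons _ _ _ i)))) as [h1 [h2 _]]; auto. }
      * intros U v i. rewrite Hsnd. apply (HS U v i).
      * pose proof (perm_helper a M N (concat Cs ++ concat (map fst Es1)) C1 C2 (concat (map fst Es2))) as Hh.
        rewrite <- !app_assoc in Hh.
        rewrite map_app, concat_app. simpl. rewrite <- !app_assoc.
        apply Hh.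
        eapply perm_trans; [apply Permutation_sym, HP2|].
        eapply perm_trans; [exact HP|].
        rewrite map_app, concat_app. simpl. rewrite <- !app_assoc. apply Permutation_refl.
Qed.
End L.
Arguments deriv_cut {A B L p}.
Arguments deriv_mono {A B C L p}.
Arguments deriv_perm {A B L L' p}.
Section M.
Variable A : Type.

Lemma nonbangs_atoms (L : list A) :
  nonbangs (map (@item_of A) (map (@FAtom A) L)) = map (fun a => supp (FAtom a)) L.
Proof. induction L; simpl; auto. now rewrite IHL. Qed.

Lemma bangs_atoms (L : list A) : bangs (map (@item_of A) (map (@FAtom A) L)) = [].
Proof. induction L; simpl; auto. Qed.

Lemma msupp_cons_elim C K s (Th : list (base A -> list A -> Prop)) :
  msupp C K (s :: Th) -> exists K1 K2, Permutation K (K1 ++ K2) /\ s C K1 /\ msupp C K2 Th.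
Proof.
  destruct Th as [|t Th]; simpl; intros H; auto.
  exists K, []. rewrite app_nil_r. auto.
Qed.

Lemma msupp_atoms (B : base A) L : msupp B L (map (fun a => supp (FAtom a)) L).
Proof.
  induction L as [|a L IH]; simpl; auto.
  destruct L as [|b L]; simpl.
  - apply d_ref; auto.
  - exists [a], (b :: L). split; [apply Permutation_refl|]. split; [apply d_ref; auto|].
    exact IH.
Qed.

Lemma multicut (C : base A) L : forall K', msupp C K' (map (fun a => supp (FAtom a)) L) ->
  forall M q, deriv C (L ++ M) q -> deriv C (K' ++ M) q.
Proof.
  induction L as [|a L IH]; intros K' HK M q H.
  - simpl in HK. subst; auto.
  - destruct (msupp_cons_elim _ _ (supp (FAtom a)) _ HK) as [K1 [K2 [HP [H1 H2]]]].
    simpl in H1.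
    pose proof (deriv_cut H a (L ++ M) K1 (Permutation_refl _) H1) as H3.
    assert (H4 : deriv C (L ++ (K1 ++ M)) q).
    { eapply deriv_perm; [exact H3|].
      rewrite !app_assoc. apply Permutation_app_tail, Permutation_app_comm. }
    apply (IH K2 H2) in H4. eapply deriv_perm; [exact H4|].
    rewrite app_assoc. apply Permutation_app_tail. eapply perm_trans; [apply Permutation_app_comm|].
    apply Permutation_sym; auto.
Qed.

End M.
Arguments multicut {A C L K'}.

Theorem lemma2 (A : Type) (B : base A) (L K : list A) (p : A) :
  ssupp (map (@FAtom A) L) B K (FAtom p) <-> deriv B (L ++ K) p.
Proof.
  destruct L as [|a L0] eqn:EL.
  - simpl. tauto.
  - rewrite <- EL. unfold ssupp.
    assert (Hm : map (@FAtom A) L = FAtom a :: map (@FAtom A) L0) by (subst; reflexivity).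
    rewrite Hm. rewrite <- Hm. unfold ante. rewrite nonbangs_atoms, bangs_atoms. split.
    + intros H. specialize (H B (fun r h => h) L (fun b i => match i with end) (msupp_atoms _ B L)).
      simpl in H. eapply deriv_perm; [exact H| apply Permutation_app_comm].
    + intros H C HC K' _ HK. simpl.
      apply (deriv_mono HC) in H.
      apply (multicut HK) in H.
      eapply deriv_perm; [exact H| apply Permutation_app_comm].
Qed.
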